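(* Let $z\in(0,+\infty)^{d_1}\times\{0\}^{d_2}$. Then: (1) the maps $\alpha\mapsto\mathbb{E}[S^{\mathcal C}_\alpha(z)]$ and $\alpha\mapsto\sigma^{\mathcal C}_\alpha(z)$ are non-increasing on $[0,\infty)$; (2) $\lim_{\alpha\to0}\mathbb{E}[S^{\mathcal C}_\alpha(z)]=\mathbb{E}[S^{\mathcal C}_0(z)]$; (3) $\lim_{\alpha\to0}\sigma^{\mathcal C}_\alpha(z)=\sigma^{\mathcal C}_0(z)$.
   Context: Fix $d_1\ge1$, $d_2\ge0$. $\xi$ is a Poisson point process on $\mathbb{R}^{d_1}\times\mathbb{Z}^{d_2}$ with intensity Lebesgue $\otimes$ counting measure; $\mathrm{Proj}^{d_2}$ is the projection on the $\mathbb{Z}^{d_2}$ coordinates. For $\alpha\ge0$: $x\prec_\alpha y$ iff $x_i+\alpha^{1/d_1}<y_i$ for all $i\le d_1$; $x\preceq y$ iff $x_i\le y_i$ for all $i\le d_1$. For $z\in(0,+\infty)^{d_1}\times\{0\}^{d_2}$, $\mathcal{C}_\alpha(z)$ is the set of finite sequences $s=(w(1),\dots,w(k))$, $k\ge0$, of points of $\xi$ with $0\preceq w(1)\prec_\alpha\cdots\prec_\alpha w(k)\prec_\alpha z$; with $w(0)=0,w(k+1)=z$, $V(s)=\sum_{i=1}^{k+1}\|\mathrm{Proj}^{d_2}(w(i))-\mathrm{Proj}^{d_2}(w(i-1))\|_1$, $R(s)=k$, $S^{\mathcal C}_\alpha(z)=\sup_{s\in\mathcal{C}_\alpha(z)}(R(s)-V(s))$,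 and $\sigma^{\mathcal C}_\alpha(z)=\lim_{\lambda\to\infty}\frac1\lambda\mathbb{E}[S^{\mathcal C}_\alpha(\lambda z)]=\sup_{\lambda>0}\frac1\lambda\mathbb{E}[S^{\mathcal C}_\alpha(\lambda z)]\in(0,\infty]$. *)

(* Defs.v *)
From HB Require Import structures.
From mathcomp Require Import all_boot all_order all_algebra.
From mathcomp Require Import all_classical all_reals all_analysis.
Set Implicit Arguments. Unset Strict Implicit. Unset Printing Implicit Defensive.
Import Order.TTheory GRing.Theory Num.Theory.
Import numFieldNormedType.Exports.
Local Open Scope classical_set_scope.
Local Open Scope ring_scope.

Section Defs.
Variables (R : realType) (d1 d2 : nat).

Definition pt := ('rV[R]_d1 * 'rV[int]_d2)%type.

Definition origin : pt := (0, 0).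

Definition ptR (zr : 'rV[R]_d1) : pt := (zr, 0).

Definition prec_alpha (alpha : R) (x y : pt) : Prop :=
  forall i : 'I_d1, x.1 ord0 i + alpha `^ (d1%:R^-1) < y.1 ord0 i.

Definition preceq (x y : pt) : Prop :=
  forall i : 'I_d1, x.1 ord0 i <= y.1 ord0 i.

Definition l1Z (v : 'rV[int]_d2) : R := (\sum_(i < d2) `|v ord0 i|)%:~R.

Fixpoint linked (alpha : R) (w : pt) (s : seq pt) (z : pt) : Prop :=
  match s with
  | [::] => prec_alpha alpha w z
  | y :: s' => prec_alpha alpha w y /\ linked alpha y s' z
  end.

Definition is_chain (X : set pt) (alpha : R) (z : pt) (s : seq pt) : Prop :=
  (forall w, w \in s -> X w) /\
  match s with
  | [::] => True
  | w :: s' => preceq origin w /\ linked alpha w s' z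
  end.

(* V(s) with w(0) = prev and w(k+1) = z *)
Fixpoint Vfrom (prev : pt) (s : seq pt) (z : pt) : R :=
  match s with
  | [::] => l1Z (z.2 - prev.2)
  | w :: s' => l1Z (w.2 - prev.2) + Vfrom w s' z
  end.

Definition Vchain (s : seq pt) (z : pt) : R := Vfrom origin s z.

Definition S_C (X : set pt) (alpha : R) (z : pt) : \bar R :=
  ereal_sup [set ((size s)%:R - Vchain s z)%:E | s in is_chain X alpha z].

Record box := Box { box_a : 'rV[R]_d1; box_b : 'rV[R]_d1; box_k : 'rV[int]_d2 }.

Definition box_set (B : box) : set pt :=
  [set x : pt | (forall i : 'I_d1, box_a B ord0 i <= x.1 ord0 i < box_b B ord0 i)
           /\ x.2 = box_k B].

(* (Lebesgue x counting)-measure of a box *)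
Definition box_vol (B : box) : R :=
  \prod_(i < d1) Num.max 0 (box_b B ord0 i - box_a B ord0 i).

Definition count_pts (X : set pt) (A : set pt) : \bar R :=
  (\esum_(x in X `&` A) (1 : \bar R))%E.

(* Poisson probability mass function, correct also for rate 0 *)
Definition pois (r : R) (n : nat) : R := r ^+ n / n`!%:R * expR (- r).

(* xi : Omega -> set pt is a Poisson point process of intensity
   Lebesgue (x) counting measure: for pairwise disjoint boxes B_1..B_n the
   counts are jointly distributed as independent Poisson variables with
   means the volumes of the boxes. *)
Definition is_PPP (dm : measure_display) (Omega : measurableType dm)
  (P : probability Omega R) (xi : Omega -> set pt) : Prop :=
  forall (n : nat) (B : 'I_n -> box) (m : 'I_n -> nat),
    (forall i j, i != j -> box_set (B i) `&` box_set (B j) = set0) ->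
    let E := [set w | forall i, count_pts (xi w) (box_set (B i)) = (m i)%:R%:E] in
    measurable E /\ P E = (\prod_(i < n) pois (box_vol (B i)) (m i))%:E.

Definition ES_C (dm : measure_display) (Omega : measurableType dm)
  (P : probability Omega R) (xi : Omega -> set pt) (alpha : R) (z : pt) : \bar R :=
  (\int[P]_w S_C (xi w) alpha z)%E.

Definition sigma_C (dm : measure_display) (Omega : measurableType dm)
  (P : probability Omega R) (xi : Omega -> set pt) (alpha : R) (zr : 'rV[R]_d1)
  : \bar R :=
  ereal_sup [set (lam^-1)%:E * ES_C P xi alpha (ptR (lam *: zr)) | lam in [set l : R | (0 < l)%R]]%E.

End Defs.

(* Main.v *)
Require Import Defs.
From HB Require Import structures.
From mathcomp Require Import all_boot all_order all_algebra.
From mathcomp Require Import all_classical all_reals all_analysis.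
From mathcomp Require Import lra measurable_realfun.
Set Implicit Arguments. Unset Strict Implicit. Unset Printing Implicit Defensive.
Import Order.TTheory GRing.Theory Num.Theory.
Import numFieldNormedType.Exports.
Local Open Scope classical_set_scope.
Local Open Scope ring_scope.

Section Geo.
Context (R : realType) (d1 d2 : nat).
Local Notation pt := (pt R d1 d2).

Definition close (e : R) (p q : pt) : Prop :=
  (forall i : 'I_d1, `|p.1 ord0 i - q.1 ord0 i| < e) /\ p.2 = q.2.

Lemma close_le e e' p q : e <= e' -> close e p q -> close e' p q.
Proof. by move=> ee [h1 h2]; split=> // i; exact: lt_le_trans (h1 i) ee. Qed.

Lemma fin_delta (P : 'I_d1 -> R -> Prop) :
  (forall i e e', 0 < e -> e <= e' -> P i e' -> P i e) ->
  (forall i, exists2 e, 0 < e & P i e) -> exists2 e, 0 < e & forall i, P i e.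
Proof.
move=> mono h.
have: \forall e \near (0:R)^'+, forall i, P i e.
  apply: filter_forall => i; have [e e0 Pe] := h i.
  near=> x; apply: (mono i x e) => //.
  by apply: ltW; near: x; exact: nbhs_right_lt.
move=> [r /= r0 H]; exists (r / 2); first by rewrite divr_gt0.
apply: H; last by rewrite divr_gt0.
rewrite /= sub0r normrN gtr0_norm ?divr_gt0 //.
by rewrite ltr_pdivrMr // ltr_pMr // ltr1n.
Unshelve. all: by end_near. Qed.

Lemma prec_open a (w y : pt) : prec_alpha a w y ->
  exists2 e, 0 < e & forall w' y', close e w' w -> close e y' y -> prec_alpha a w' y'.
Proof.
move=> h.
pose c := a `^ (d1%:R^-1).
edestruct (@fin_delta (fun i e => forall w' y' : pt,
   `|w'.1 ord0 i - w.1 ord0 i| < e -> `|y'.1 ord0 i - y.1 ord0 i| < e ->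
   w'.1 ord0 i + c < y'.1 ord0 i)) as [e e0 He].
- move=> i e e' e0 ee H w' y' h1 h2; apply: H.
  + exact: lt_le_trans h1 ee.
  + exact: lt_le_trans h2 ee.
- move=> i; have := h i; rewrite -/c => hi.
  exists ((y.1 ord0 i - (w.1 ord0 i + c)) / 2); first by rewrite divr_gt0 // subr_gt0.
  move=> w' y'; rewrite !ltr_norml => /andP[_ h1] /andP[h2 _].
  move: h1 h2 hi; lra.
- by exists e => // w' y' [h1 _] [h2 _] i; apply: He.
Qed.

Fixpoint F2 {A B : Type} (r : A -> B -> Prop) (s : seq A) (t : seq B) : Prop :=
  match s, t with
  | [::], [::] => True
  | x :: s', y :: t' => r x y /\ F2 r s' t'
  | _, _ => False
  end.

Lemma F2_size {A B : Type} (r : A -> B -> Prop) s t : F2 r s t -> size s = size t.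
Proof. by elim: s t => [|x s IH] [|y t] //= [_ /IH ->]. Qed.

Lemma F2_impl {A B : Type} (r r' : A -> B -> Prop) s t :
  (forall x y, r x y -> r' x y) -> F2 r s t -> F2 r' s t.
Proof. by move=> h; elim: s t => [|x s IH] [|y t] //= [/h ? /IH]. Qed.

Lemma F2_and {A B : Type} (r r' : A -> B -> Prop) s t :
  F2 r s t -> F2 r' s t -> F2 (fun x y => r x y /\ r' x y) s t.
Proof. by elim: s t => [|x s IH] [|y t] //= [? ?] [? ?]; split => //; apply: IH. Qed.

Definition geom (a : R) (z : pt) (ps : seq pt) : Prop :=
  match ps with [::] => True | w :: s' => preceq (origin R d1 d2) w /\ linked a w s' z end.

Definition posp (p q : pt) : Prop := forall i : 'I_d1, 0 <= q.1 ord0 i -> 0 <= p.1 ord0 i.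

Lemma close_refl e (p : pt) : 0 < e -> close e p p.
Proof. by move=> e0; split => // i; rewrite subrr normr0. Qed.

Lemma linked_open a z s : forall w, linked a w s z ->
  exists2 e, 0 < e & forall w' s', close e w' w -> F2 (close e) s' s -> linked a w' s' z.
Proof.
elim: s => [|y s IH] w /=.
  move=> /prec_open[e e0 He]; exists e => // w' [|//] cw _.
  by apply: He => //; exact: close_refl.
move=> [/prec_open[e1 e10 He1] /IH[e2 e20 He2]].
exists (Order.min e1 e2); first by rewrite lt_min e10 e20.
move=> w' [//|y' s'] cw [cy cs]; split.
  by apply: He1; apply: close_le cw || apply: close_le cy; rewrite ge_min lexx ?orbT.
apply: He2; first by apply: close_le cy; rewrite ge_min lexx ?orbT.
by apply: F2_impl cs => x x' ; apply: close_le; rewrite ge_min lexx ?orbT.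
Qed.

Lemma geom_open a z s : geom a z s ->
  exists2 e, 0 < e & forall s', F2 (close e) s' s -> F2 posp s' s -> geom a z s'.
Proof.
case: s => [|w s] /=.
  by move=> _; exists 1 => // [[|//]].
move=> [pw /linked_open[e e0 He]]; exists e => // [[//|w' s']] /= [cw cs] [pp _].
split; last exact: He.
move=> i; have := pw i; rewrite /origin /= !mxE => /pp; exact.
Qed.

Definition cb := ('rV[rat]_d1 * 'rV[rat]_d1 * 'rV[int]_d2)%type.

Definition tobox (b : cb) : box R d1 d2 :=
  Box (map_mx (@ratr R) b.1.1) (map_mx (@ratr R) b.1.2) b.2.

Lemma coord_exists (x e : R) : 0 < e -> exists qq : rat * rat,
  [/\ x - e < ratr qq.1, ratr qq.1 <= x, x < ratr qq.2, ratr qq.2 < x + e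
    & (0 <= x -> 0 <= (ratr qq.1 : R))].
Proof.
move=> e0.
have [qb] : exists qb : rat, (ratr qb : R) \in `]x, x + e[ by apply: rat_in_itvoo; rewrite ltrDl.
rewrite in_itv /= => /andP[b1 b2].
have [x0|x0] := boolP (0 <= x); last first.
  have [qa] : exists qa : rat, (ratr qa : R) \in `]x - e, x[ by apply: rat_in_itvoo; rewrite gtrBl.
  rewrite in_itv /= => /andP[a1 a2].
  exists (qa, qb); split => //=; first exact: ltW.
have [xe|xe] := boolP (x - e < 0).
  by exists (0, qb); split => //=; rewrite rmorph0.
have [qa] : exists qa : rat, (ratr qa : R) \in `]x - e, x[ by apply: rat_in_itvoo; rewrite gtrBl.
rewrite in_itv /= => /andP[a1 a2].
exists (qa, qb); split => //=; first exact: ltW.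
by move=> _; rewrite -leNgt in xe; move: xe a1; lra.
Qed.

Lemma box_exists (w : pt) e : 0 < e -> exists b : cb,
  [/\ box_set (tobox b) w, b.2 = w.2 &
     forall p, box_set (tobox b) p -> close e p w /\ posp p w].
Proof.
move=> e0.
have [f Hf] := choice (fun i : 'I_d1 => coord_exists (w.1 ord0 i) e0).
exists (\row_i (f i).1, \row_i (f i).2, w.2); split => //.
  split => //= i; rewrite !mxE.
  by have [_ -> -> _ _] := Hf i.
move=> p [/= hp hp2]; split; last first.
  move=> i wi; have := hp i; rewrite !mxE => /andP[+ _].
  by have [_ _ _ _ /(_ wi)] := Hf i; apply: le_trans.
split => // i; have := hp i; rewrite !mxE => /andP[h1 h2].
have [a1 a2 b1 b2 _] := Hf i; rewrite ltr_norml.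
by apply/andP; split; move: h1 h2 a1 a2 b1 b2; lra.
Qed.

Fixpoint VZ (prev : 'rV[int]_d2) (ks : seq 'rV[int]_d2) (zk : 'rV[int]_d2) : R :=
  match ks with
  | [::] => l1Z R (zk - prev)
  | k :: ks' => l1Z R (k - prev) + VZ k ks' zk
  end.

Lemma Vfrom_VZ (s : seq pt) : forall (prev z : pt),
  Vfrom prev s z = VZ prev.2 (map snd s) z.2.
Proof. by elim: s => [|w s IH] prev z //=; rewrite IH. Qed.

Definition valc (z : pt) (c : seq cb) : R :=
  (size c)%:R - VZ 0 (map snd c) z.2.

Definition good (a : R) (z : pt) (c : seq cb) : Prop :=
  forall ps, F2 (fun p b => box_set (tobox b) p) ps c -> geom a z ps.

Definition hits (X : set pt) (c : seq cb) : Prop :=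
  forall b, b \in c -> (X `&` box_set (tobox b)) !=set0.

Lemma F2_exists {A B : Type} (r : A -> B -> Prop) :
  (forall x, exists y, r x y) -> forall s, exists t, F2 r s t.
Proof.
move=> h; elim => [|x s [t Ht]]; first by exists [::].
by have [y Hy] := h x; exists (y :: t).
Qed.

Lemma F2_comp {A B C : Type} (r1 : A -> C -> Prop) (r2 : B -> C -> Prop)
  (r3 : A -> B -> Prop) s t u :
  (forall x y z, r1 x z -> r2 y z -> r3 x y) -> F2 r1 s u -> F2 r2 t u -> F2 r3 s t.
Proof.
move=> h; elim: s t u => [|x s IH] [|y t] [|z u] //= [h1 h1'] [h2 h2'].
by split; [exact: h h1 h2 | exact: IH h1' h2'].
Qed.

Lemma F2_mem {A B : eqType} (r : A -> B -> Prop) s t b :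
  F2 r s t -> b \in t -> exists w, w \in s /\ r w b.
Proof.
elim: s t => [|x s IH] [|y t] //= [hxy hst].
rewrite in_cons => /orP[/eqP ->|/(IH _ hst) [w [ws rw]]].
  by exists x; rewrite mem_head.
by exists w; rewrite in_cons ws orbT.
Qed.

Lemma F2_map {A B C : Type} (f : A -> C) (g : B -> C) s t :
  F2 (fun x y => f x = g y) s t -> map f s = map g t.
Proof. by elim: s t => [|x s IH] [|y t] //= [-> /IH ->]. Qed.

Lemma chain_to_code (X : set pt) a z s : is_chain X a z s ->
  exists c, [/\ good a z c, hits X c & valc z c = (size s)%:R - Vchain s z].
Proof.
move=> [Xs gs]; have [e e0 He] := geom_open (gs : geom a z s).
have [c Hc] := F2_exists (fun w => box_exists w e0) s.
exists c; split.
- move=> ps hps; apply: He.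
    apply: F2_comp hps Hc => p w b hp [_ _ /(_ p hp) []] //.
  apply: F2_comp hps Hc => p w b hp [_ _ /(_ p hp) []] //.
- move=> b /(F2_mem Hc) [w [ws [wb _ _]]].
  by exists w; split => //; apply: Xs.
- rewrite /valc /Vchain Vfrom_VZ (F2_size Hc); congr (_ - VZ _ _ _).
  apply: esym; apply: F2_map; apply: F2_impl Hc => w b [_ -> _] //.
Qed.

Lemma hits_pick (X : set pt) c : hits X c ->
  exists ps, F2 (fun p b => box_set (tobox b) p) ps c /\ (forall p, p \in ps -> X p).
Proof.
elim: c => [|b c IH] h; first by exists [::].
have [|ps [H1 H2]] := IH.
  by move=> b' bc; apply: h; rewrite in_cons bc orbT.
have [p [Xp bp]] := h b (mem_head _ _).
exists (p :: ps); split => // q; rewrite in_cons => /orP[/eqP ->//|]; exact: H2.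
Qed.

Lemma code_to_chain (X : set pt) a z c : good a z c -> hits X c ->
  exists s, is_chain X a z s /\ (size s)%:R - Vchain s z = valc z c.
Proof.
move=> gc /hits_pick [ps [H1 H2]]; exists ps; split.
  by split => //; apply: gc.
rewrite /valc /Vchain Vfrom_VZ (F2_size H1); congr (_ - VZ _ _ _).
by apply: F2_map; apply: F2_impl H1 => p b [_ ->].
Qed.

Local Open Scope ereal_scope.
Definition hk (a : R) (z : pt) (X : set pt) (k : nat) : \bar R :=
  match @unpickle (seq cb) k with
  | Some c => if `[< good a z c /\ hits X c >] then (valc z c)%:E else -oo
  | None => -oo
  end.

Lemma S_C_sup X a z : S_C X a z = ereal_sup (range (hk a z X)).
Proof.
apply/eqP; rewrite eq_le; apply/andP; split.
  apply: ub_ereal_sup => _ [s Hs <-].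
  have [c [gc hc vc]] := chain_to_code Hs.
  apply: ereal_sup_ubound; exists (pickle c) => //.
  by rewrite /hk pickleK asboolT // vc.
apply: ub_ereal_sup => _ [k _ <-]; rewrite /hk.
case: unpickle => [c|]; last by rewrite leNye.
case: asboolP => [[gc hc]|_]; last by rewrite leNye.
have [s [Hs vs]] := code_to_chain gc hc.
by apply: ereal_sup_ubound; exists s => //; rewrite vs.
Qed.

Lemma count_pts0 (X A : set pt) : count_pts X A = 0 <-> X `&` A = set0.
Proof.
split; last by rewrite /count_pts => ->; rewrite esum_set0.
move=> h; apply/seteqP; split => // x Xx; exfalso.
have : 1 <= count_pts X A.
  apply: esum_ge; exists [set x]; last by rewrite fsbig_set1.
  by split; [exact: finite_set1 | move=> y ->].
by rewrite h lee_fin ler10.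
Qed.

Lemma meas_hit (dm : measure_display) (Omega : measurableType dm)
  (P : probability Omega R) (xi : Omega -> set pt) (b : cb) :
  is_PPP P xi -> measurable [set w | (xi w `&` box_set (tobox b)) !=set0].
Proof.
move=> hP.
have disj : forall i j : 'I_1, i != j ->
    box_set (tobox b) `&` box_set (tobox b) = set0 by move=> i j; rewrite !ord1 eqxx.
have [mE _] := hP 1%N (fun _ => tobox b) (fun _ => 0%N) disj.
set E := [set w | _] in mE.
have -> : [set w | (xi w `&` box_set (tobox b)) !=set0] = ~` E.
  apply/seteqP; split => w /=.
    move=> [x hx] hE; have := hE ord0; rewrite count_pts0 => h.
    by have : set0 x by rewrite -h.
  move=> hE; apply/set0P/eqP => h; apply: hE => i.
  exact/(count_pts0 (xi w)).
exact: measurableC.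
Qed.

Lemma meas_hits (dm : measure_display) (Omega : measurableType dm)
  (P : probability Omega R) (xi : Omega -> set pt) (c : seq cb) :
  is_PPP P xi -> measurable [set w | hits (xi w) c].
Proof.
move=> hP; elim: c => [|b c IH].
  by rewrite (_ : [set w | _] = setT); [exact: measurableT|apply/seteqP; split].
rewrite (_ : [set w | _] = [set w | (xi w `&` box_set (tobox b)) !=set0]
   `&` [set w | hits (xi w) c]); first by apply: measurableI; [exact: meas_hit hP|exact: IH].
apply/seteqP; split => w /=.
  move=> h; split; first by apply: h; rewrite mem_head.
  by move=> b' bc; apply: h; rewrite in_cons bc orbT.
move=> [h1 h2] b'; rewrite in_cons => /orP[/eqP ->//|]; exact: h2.
Qed.

Lemma meas_S_C (dm : measure_display) (Omega : measurableType dm)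
  (P : probability Omega R) (xi : Omega -> set pt) a z :
  is_PPP P xi -> measurable_fun setT (fun w => S_C (xi w) a z).
Proof.
move=> hP.
have -> : (fun w => S_C (xi w) a z) =
    (fun w => esups ((fun k w => hk a z (xi w) k) ^~ w) 0%N).
  apply/funext => w; rewrite S_C_sup /esups /sdrop /=; congr ereal_sup.
  by apply/seteqP; split => _ [k _ <-]; exists k.
apply: measurable_fun_esups => k.
rewrite /hk; case: unpickle => [c|]; last exact: measurable_cst.
have [gc|ngc] := pselect (good a z c); last first.
  rewrite (_ : (fun _ => _) = cst -oo); first exact: measurable_cst.
  by apply/funext => w; rewrite asboolF // => -[].
rewrite (_ : (fun _ => _) = (fun w => if `[< hits (xi w) c >] then (valc z c)%:E else -oo)).
  apply: measurable_fun_ifT; [|exact: measurable_cst|exact: measurable_cst].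
  apply: (measurable_fun_bool true); rewrite setTI.
  rewrite (_ : _ @^-1` _ = [set w | hits (xi w) c]); first exact: meas_hits hP.
  by apply/seteqP; split => w /=; [move/asboolP|move/asboolP].
apply/funext => w; case: asboolP => [[_ h]|h]; first by rewrite asboolT.
by rewrite asboolF // => h'; apply: h.
Qed.

Local Open Scope ring_scope.
Local Notation r := (d1%:R^-1 : R).

Lemma prec_mono a b (w y : pt) : a `^ r <= b `^ r -> prec_alpha b w y -> prec_alpha a w y.
Proof. by move=> ab h i; apply: le_lt_trans (h i); rewrite lerD2l. Qed.

Lemma linked_mono a b (z : pt) s : a `^ r <= b `^ r -> forall w : pt, linked b w s z -> linked a w s z.
Proof.
move=> ab; elim: s => [|y s IH] w /=; first exact: prec_mono.
by move=> [h1 h2]; split; [exact: prec_mono h1|exact: IH].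
Qed.

Lemma chain_mono (X : set pt) a b (z : pt) s : a `^ r <= b `^ r -> is_chain X b z s -> is_chain X a z s.
Proof.
move=> ab [h1 h2]; split => //; move: h2; case: s {h1} => [|w s] //= [h3 h4].
by split => //; exact: linked_mono h4.
Qed.

Lemma S_C_mono (X : set pt) a b (z : pt) : a `^ r <= b `^ r -> (S_C X b z <= S_C X a z)%E.
Proof.
move=> ab; apply: ub_ereal_sup => _ [s Hs <-].
by apply: ereal_sup_ubound; exists s => //; exact: chain_mono Hs.
Qed.

Lemma S_C_ge0 (X : set pt) a zr : (0 <= S_C X a (ptR d2 zr))%E.
Proof.
apply: ereal_sup_ubound; exists [::]; first by split.
rewrite /Vchain /= /l1Z subr0 big1 ?sub0r ?oppr0 // => i _.
by rewrite mxE.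
Qed.

Lemma powr_mono a b : 0 <= a -> a <= b -> a `^ r <= b `^ r.
Proof.
move=> a0 ab; apply: ge0_ler_powR => //; rewrite ?nnegrE ?invr_ge0 ?ler0n //.
exact: le_trans a0 ab.
Qed.

Lemma prec0_open (d1pos : (0 < d1)%N) (w y : pt) : prec_alpha 0 w y ->
  exists2 e, 0 < e & forall a, a `^ r < e -> prec_alpha a w y.
Proof.
move=> h.
have r0 : r != 0 by rewrite invr_eq0 pnatr_eq0 -lt0n.
edestruct (@fin_delta (fun i e => forall a : R, a `^ r < e ->
   w.1 ord0 i + a `^ r < y.1 ord0 i)) as [e e0 He].
- move=> i e e' e0 ee H a ha; apply: H; exact: lt_le_trans ha ee.
- move=> i; have := h i; rewrite powR0 // addr0 => hi.
  exists (y.1 ord0 i - w.1 ord0 i); first by rewrite subr_gt0.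
  by move=> a ha; move: ha hi; lra.
- by exists e => // a ha i; apply: He.
Qed.

Lemma linked0_open (d1pos : (0 < d1)%N) (z : pt) s : forall w : pt, linked 0 w s z ->
  exists2 e, 0 < e & forall a, a `^ r < e -> linked a w s z.
Proof.
elim: s => [|y s IH] w /=; first exact: prec0_open.
move=> [/(prec0_open d1pos)[e1 e10 He1] /IH[e2 e20 He2]].
exists (Order.min e1 e2); first by rewrite lt_min e10 e20.
move=> a; rewrite lt_min => /andP[h1 h2]; split; [exact: He1|exact: He2].
Qed.

Lemma chain0_open (d1pos : (0 < d1)%N) (X : set pt) (z : pt) s : is_chain X 0 z s ->
  exists2 e, 0 < e & forall a, a `^ r < e -> is_chain X a z s.
Proof.
move=> [h1]; case: s h1 => [|w s] h1 /=.
  by move=> _; exists 1 => // a _; split.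
move=> [h2 /(linked0_open d1pos)[e e0 He]]; exists e => // a ha.
by split => //=; split => //; apply: He.
Qed.

Definition al (n : nat) : R := (n.+1%:R^-1) ^+ d1.

Lemma al_gt0 n : 0 < al n.
Proof. by rewrite /al exprn_gt0 // invr_gt0 ltr0n. Qed.

Lemma al_pow (d1pos : (0 < d1)%N) n : al n `^ r = n.+1%:R^-1.
Proof.
have h0 : 0 <= (n.+1%:R^-1 : R) by rewrite invr_ge0 ler0n.
rewrite /al -powR_mulrn // -powRrM mulfV ?powRr1 //.
by rewrite pnatr_eq0 -lt0n.
Qed.

Lemma S_C0_sup (d1pos : (0 < d1)%N) (X : set pt) (z : pt) :
  S_C X 0 z = ereal_sup (range (fun n => S_C X (al n) z)).
Proof.
apply/eqP; rewrite eq_le; apply/andP; split; last first.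
  apply: ub_ereal_sup => _ [n _ <-]; apply: S_C_mono.
  by apply: powr_mono => //; exact: ltW (al_gt0 n).
apply: ub_ereal_sup => _ [s Hs <-].
have [e e0 He] := chain0_open d1pos Hs.
have [N _ HN] := near_infty_natSinv_lt (PosNum e0).
apply: (@le_trans _ _ (S_C X (al N) z)); last by apply: ereal_sup_ubound; exists N.
apply: ereal_sup_ubound; exists s => //; apply: He.
by rewrite al_pow //; exact: (HN N (leqnn N)).
Qed.

Local Open Scope ereal_scope.
Lemma ES_mono (dm : measure_display) (Omega : measurableType dm)
  (P : probability Omega R) (xi : Omega -> set pt) a b zr :
  is_PPP P xi -> (a `^ r <= b `^ r)%R ->
  ES_C P xi b (ptR d2 zr) <= ES_C P xi a (ptR d2 zr).
Proof.
move=> hP ab; rewrite /ES_C; apply: ge0_le_integral => //.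
- by move=> w _; exact: S_C_ge0.
- exact: meas_S_C hP.
- exact: meas_S_C hP.
- by move=> w _; exact: S_C_mono.
Qed.

Lemma ES0_le (d1pos : (0 < d1)%N) (dm : measure_display) (Omega : measurableType dm)
  (P : probability Omega R) (xi : Omega -> set pt) zr M :
  is_PPP P xi -> (forall a, (0 < a)%R -> ES_C P xi a (ptR d2 zr) <= M) ->
  ES_C P xi 0 (ptR d2 zr) <= M.
Proof.
move=> hP hM.
pose g n w := S_C (xi w) (al n) (ptR d2 zr).
have nd : forall w, {homo g^~ w : n m / (n <= m)%N >-> n <= m}.
  move=> w n m nm; apply: S_C_mono; rewrite !al_pow //.
  by rewrite lef_pV2 ?posrE ?ltr0n // ler_nat.
have mct := @monotone_convergence _ _ _ P setT measurableT g
  (fun n => meas_S_C _ _ hP) (fun n w _ => S_C_ge0 _ _ _) (fun w _ => nd w).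
have eq : (fun w => limn (g ^~ w)) = fun w => S_C (xi w) 0 (ptR d2 zr).
  apply/funext => w; rewrite S_C0_sup //; apply: cvg_lim => //.
  exact: ereal_nondecreasing_cvgn.
rewrite /ES_C -eq mct; apply: lime_le.
  apply: ereal_nondecreasing_is_cvgn => n m nm.
  apply: ge0_le_integral => //.
  - by move=> w _; exact: S_C_ge0.
  - exact: meas_S_C hP.
  - exact: meas_S_C hP.
  - by move=> w _; exact: nd.
by apply: nearW => n; apply: hM; exact: al_gt0.
Qed.
End Geo.

Unset Implicit Arguments.
Local Open Scope ring_scope.
Theorem mainTheorem9 (R : realType) (d1 d2 : nat) (dm : measure_display)
  (Omega : measurableType dm) (P : probability Omega R)
  (xi : Omega -> set (pt R d1 d2)) (zr : 'rV[R]_d1) :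
  (0 < d1)%N ->
  is_PPP P xi ->
  (forall i : 'I_d1, 0 < zr ord0 i) ->
  [/\ (forall alpha beta : R, 0 <= alpha -> alpha <= beta ->
         (ES_C P xi beta (ptR d2 zr) <= ES_C P xi alpha (ptR d2 zr))%E),
      (forall alpha beta : R, 0 <= alpha -> alpha <= beta ->
         (sigma_C P xi beta zr <= sigma_C P xi alpha zr)%E),
      ES_C P xi alpha (ptR d2 zr) @[alpha --> 0^'+] --> ES_C P xi 0 (ptR d2 zr)
    & sigma_C P xi alpha zr @[alpha --> 0^'+] --> sigma_C P xi 0 zr].
Proof.
move=> d1pos hP _.
have ESm : forall zr' (alpha beta : R), 0 <= alpha -> alpha <= beta ->
    (ES_C P xi beta (ptR d2 zr') <= ES_C P xi alpha (ptR d2 zr'))%E.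
  by move=> zr' a b a0 ab; apply: ES_mono hP _; exact: powr_mono.
have sm : forall (alpha beta : R), 0 <= alpha -> alpha <= beta ->
    (sigma_C P xi beta zr <= sigma_C P xi alpha zr)%E.
  move=> a b a0 ab; apply: ub_ereal_sup => _ [lam lam0 <-].
  apply: (@le_trans _ _ ((lam^-1)%:E * ES_C P xi a (ptR d2 (lam *: zr)))%E).
    by apply: lee_wpmul2l; [rewrite lee_fin invr_ge0 ltW|exact: ESm].
  by apply: ereal_sup_ubound; exists lam.
have ESsup : forall zr', ereal_sup ((fun a => ES_C P xi a (ptR d2 zr')) @`
      [set` Interval (BRight (0:R)) (BInfty R false)]) = ES_C P xi 0 (ptR d2 zr').
  move=> zr'; apply/eqP; rewrite eq_le; apply/andP; split.
    apply: ub_ereal_sup => _ [a + <-]; rewrite /= in_itv /= andbT => a0.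
    by apply: ESm => //; exact: ltW.
  apply: ES0_le => // a a0; apply: ereal_sup_ubound; exists a => //=.
  by rewrite in_itv /= andbT.
split => //.
- exact: ESm.
- rewrite -ESsup; apply: (nonincreasing_at_right_cvge (BInfty R false)) => //.
  move=> a b; rewrite !in_itv /= !andbT => a0 b0 ab; apply: ESm => //; exact: ltW.
- suff <- : ereal_sup ((fun a => sigma_C P xi a zr) @`
      [set` Interval (BRight (0:R)) (BInfty R false)]) = sigma_C P xi 0 zr.
    apply: (nonincreasing_at_right_cvge (BInfty R false)) => //; move=> a b; rewrite !in_itv /= !andbT => a0 b0 ab; apply: sm => //; exact: ltW.
  apply/eqP; rewrite eq_le; apply/andP; split.
    apply: ub_ereal_sup => _ [a + <-]; rewrite /= in_itv /= andbT => a0.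
    by apply: sm => //; exact: ltW.
  apply: ub_ereal_sup => _ [lam lam0 <-].
  rewrite -(ESsup (lam *: zr)) -ereal_sup_pZl ?invr_gt0 //.
  apply: ub_ereal_sup => _ [_ [a + <-] <-]; rewrite /= in_itv /= andbT => a0.
  apply: (@le_trans _ _ (sigma_C P xi a zr)).
    by apply: ereal_sup_ubound; exists lam.
  by apply: ereal_sup_ubound; exists a => //=; rewrite in_itv /= andbT.
Qed.
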